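(* Let $k\ge 3$, let $G_1,\ldots,G_k$ be a finite sequence of pairwise disjoint connected graphs and let $x_i\in V(G_i)$. Let $G$ be the circuit of the graphs $\{G_i\}_{i=1}^k$ with respect to the vertices $\{x_i\}_{i=1}^k$. Then $$SO(G)>\frac{|d_{x_1}-d_{x_k}|}{\sqrt{2}}+\sum_{i=1}^{k}SO(G_i)+\sum_{i=1}^{k-1}\frac{|d_{x_i}-d_{x_{i+1}}|}{\sqrt{2}},$$ where $d_v$ denotes the degree of $v$ in $G$.
   Context: All graphs are finite and simple. For a graph $H$, $SO(H)=\sum_{uv\in E(H)}\sqrt{d_u^2+d_v^2}$, where $d_u$ is the degree of $u$ in $H$ (the Sombor index). The circuit of $G_1,\ldots,G_k$ with respect to $x_1,\ldots,x_k$ is the graph obtained from the disjoint union of $G_1,\ldots,G_k$ and a cycle $C_k$ with vertices $c_1,\ldots,c_k$ in cyclic order, by identifying $x_i$ with $c_i$ for each $i$ (so the edges $x_ix_{i+1}$, $1\le i\le k-1$, and $x_kx_1$ are added). *)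

(* Defs.v *)
From HB Require Import structures.
From mathcomp Require Import all_boot all_order all_algebra.
From mathcomp Require Import reals.
Set Implicit Arguments. Unset Strict Implicit. Unset Printing Implicit Defensive.
Import Order.TTheory GRing.Theory Num.Theory.
Local Open Scope ring_scope.

Record sgraph := SGraph {
  vert : finType;
  adj : rel vert;
  adj_sym : symmetric adj;
  adj_irr : irreflexive adj }.

Definition connected_graph (G : sgraph) : Prop :=
  forall u v : vert G, connect (@adj G) u v.

Definition deg (T : finType) (e : rel T) (u : T) : nat := #|[set v | e u v]|.

(* Sombor index: sum over edges uv of sqrt(d_u^2 + d_v^2); each unordered edge
   is counted twice among ordered adjacent pairs, hence the factor 1/2. *)
Definition SO (R : realType) (T : finType) (e : rel T) : R :=
  2^-1 * \sum_(p : T * T | e p.1 p.2)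
           Num.sqrt ((deg e p.1)%:R ^+ 2 + (deg e p.2)%:R ^+ 2).

Definition SOg (R : realType) (G : sgraph) : R := SO R (@adj G).

(* The circuit of G_0,...,G_{k-1} w.r.t. x_0,...,x_{k-1}: vertex set is the
   disjoint union {i : 'I_k & vert (G i)}; edges are the edges inside each G_i
   plus the cycle edges x_i x_{i+1 mod k}. *)
Definition circ_vert k (G : 'I_k -> sgraph) : finType :=
  {i : 'I_k & vert (G i)}.

Definition circ_adj k (G : 'I_k -> sgraph) (x : forall i, vert (G i)) :
    rel (circ_vert G) :=
  fun u v =>
    ((tag u == tag v) && @adj (G (tag u)) (tagged u) (tagged_as u v))
    || [exists i : 'I_k,
          ((u == Tagged (fun j => vert (G j)) (x i))
            && (v == Tagged (fun j => vert (G j)) (x (ordS i))))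
       || ((v == Tagged (fun j => vert (G j)) (x i))
            && (u == Tagged (fun j => vert (G j)) (x (ordS i))))].

Arguments circ_adj {k} G x.

(* degree in the circuit G of the vertex x_i (0-indexed, i < k; 0 otherwise) *)
Definition dx k (G : 'I_k -> sgraph) (x : forall i, vert (G i)) (i : nat) : nat :=
  match (insub i : option 'I_k) with
  | Some j => deg (circ_adj G x) (Tagged (fun j => vert (G j)) (x j))
  | None => 0%N
  end.

Arguments dx {k} G x i.

(* Main.v *)
Require Import Defs.
From HB Require Import structures.
From mathcomp Require Import all_boot all_order all_algebra.
From mathcomp Require Import reals lra zify.
Import Order.TTheory GRing.Theory Num.Theory.
Local Open Scope ring_scope.
Set Implicit Arguments. Unset Strict Implicit.

Lemma sum_inj_le (R : realType) (I J : finType) (M : I -> J) (Q : pred I) (P : pred J)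
  (F : J -> R) : injective M -> (forall i, Q i -> P (M i)) ->
  (forall j, P j -> 0 <= F j) ->
  \sum_(i | Q i) F (M i) <= \sum_(j | P j) F j.
Proof.
move=> injM QP F0.
have -> : \sum_(i | Q i) F (M i) = \sum_(j in M @: [set i | Q i]) F j.
  by rewrite big_imset; [apply: eq_bigl => i; rewrite inE | move=> a b _ _; apply: injM].
rewrite [X in _ <= X]big_mkcond [X in X <= _]big_mkcond /=.
apply: ler_sum => j _.
case: ifP => [/imsetP [i] | _].
  rewrite inE => Qi ->; by rewrite QP.
by case: ifP => // /F0.
Qed.

Lemma Tagged_inj (I : eqType) (T_ : I -> eqType) (i : I) : injective (@Tagged I i T_).
Proof. move=> a b /(congr1 (tagged_as (Tagged T_ a))); by rewrite !tagged_asE. Qed.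


Lemma valS k (i : 'I_k) : nat_of_ord (ordS i) = if i.+1 == k then 0%N else i.+1.
Proof.
rewrite /=; case: eqP => [e|ne]; first by rewrite e modnn.
by rewrite modn_small //; have := ltn_ord i; lia.
Qed.

Lemma ordS_neq k (hk : (3 <= k)%N) (i : 'I_k) : ordS i != i.
Proof. apply/eqP => /(congr1 (@nat_of_ord k)); rewrite valS; have := ltn_ord i; case: eqP; lia. Qed.

Lemma ordSS_neq k (hk : (3 <= k)%N) (i : 'I_k) : ordS (ordS i) != i.
Proof.
apply/eqP => /(congr1 (@nat_of_ord k)); rewrite valS.
have := ltn_ord (ordS i); have := ltn_ord i; rewrite valS.
by case: eqP; case: eqP; lia.
Qed.

Section S.
Local Notation X G x i := (Tagged (fun j => vert (G j)) (x i)).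

Lemma adj_in k (G : 'I_k -> sgraph) (x : forall i, vert (G i)) i (a b : vert (G i)) :
  adj a b -> circ_adj G x (Tagged (fun j => vert (G j)) a) (Tagged (fun j => vert (G j)) b).
Proof. by move=> ab; rewrite /circ_adj /= eqxx tagged_asE ab. Qed.

Lemma deg_le k (G : 'I_k -> sgraph) (x : forall i, vert (G i)) i (a : vert (G i)) :
  (deg (@adj (G i)) a <= deg (circ_adj G x) (Tagged (fun j => vert (G j)) a))%N.
Proof.
rewrite /deg -(card_imset _ (@Tagged_inj _ (fun j => vert (G j)) i)).
apply: subset_leq_card; apply/subsetP => w /imsetP [b]; rewrite !inE => ab ->.
exact: adj_in.
Qed.

Lemma adj_cyc1 k (G : 'I_k -> sgraph) (x : forall i, vert (G i)) i :
  circ_adj G x (X G x i) (X G x (ordS i)).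
Proof. by apply/orP; right; apply/existsP; exists i; rewrite !eqxx. Qed.

Lemma adj_cyc2 k (G : 'I_k -> sgraph) (x : forall i, vert (G i)) i :
  circ_adj G x (X G x (ordS i)) (X G x i).
Proof. by apply/orP; right; apply/existsP; exists i; rewrite !eqxx orbT. Qed.

Lemma deg_pos k (G : 'I_k -> sgraph) (x : forall i, vert (G i)) i :
  (0 < deg (circ_adj G x) (X G x i))%N.
Proof.
rewrite /deg card_gt0; apply/set0Pn; exists (X G x (ordS i)); rewrite inE.
exact: adj_cyc1.
Qed.

Lemma dxE k (G : 'I_k -> sgraph) (x : forall i, vert (G i)) (i : 'I_k) :
  dx G x i = deg (circ_adj G x) (X G x i).
Proof. by rewrite /dx valK. Qed.
End S.


Lemma cyc_sum (R : realType) (n : nat) (F : nat -> nat -> R) : (0 < n)%N ->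
  \sum_(i < n) F i ((i.+1) %% n)%N = F n.-1 0%N + \sum_(0 <= i < n.-1) F i i.+1.
Proof.
case: n => // n _; rewrite big_ord_recr /= modnn big_mkord addrC; congr (_ + _).
by apply: eq_bigr => i _; rewrite modn_small // ltnS ltn_ord.
Qed.
Lemma term_lt (R : realType) (a b : nat) : (0 < a)%N ->
  `|a%:R - b%:R| / Num.sqrt 2 < Num.sqrt (a%:R ^+ 2 + b%:R ^+ 2) :> R.
Proof.
move=> a0; rewrite ltr_pdivrMr ?sqrtr_gt0 ?ltr0n // -sqrtrM ?addr_ge0 ?exprn_ge0 ?ler0n //.
rewrite -sqrtr_sqr ltr_sqrt; last by rewrite mulr_gt0 // ltr_wpDr ?exprn_gt0 ?ltr0n ?exprn_ge0 ?ler0n.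
have : 1 <= a%:R :> R by rewrite ler1n.
have : 0 <= b%:R :> R by rewrite ler0n.
move: (a%:R : R) (b%:R : R) => u v; nra.
Qed.

Theorem mainTheorem3 (R : realType) (k : nat) (hk : (3 <= k)%N)
    (G : 'I_k -> sgraph) (hconn : forall i, connected_graph (G i))
    (x : forall i, vert (G i)) :
  SO R (circ_adj G x) >
    `|(dx G x 0)%:R - (dx G x k.-1)%:R| / Num.sqrt 2
    + \sum_(i < k) SOg R (G i)
    + \sum_(0 <= i < k.-1) `|(dx G x i)%:R - (dx G x i.+1)%:R| / Num.sqrt 2.
Proof.
set e := circ_adj G x.
pose fC (p : circ_vert G * circ_vert G) : R :=
  Num.sqrt ((deg e p.1)%:R ^+ 2 + (deg e p.2)%:R ^+ 2).
pose X i := Tagged (fun j => vert (G j)) (x i).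
pose c (i : 'I_k) := fC (X i, X (ordS i)).
have fC0 p : 0 <= fC p by apply: sqrtr_ge0.
have -> : SO R e = 2^-1 * \sum_(p | e p.1 p.2) fC p by [].
rewrite (bigID (fun p : circ_vert G * circ_vert G => tag p.1 == tag p.2)) /=.
set S1 := \sum_(p | _ && _) _.
set S2 := \sum_(p | _ && _) _.
have H1 : \sum_(i < k) SOg R (G i) <= 2^-1 * S1.
  rewrite /SOg /SO -mulr_sumr ler_pM2l ?invr_gt0 ?ltr0n //.
  rewrite (sig_big_dep (J := fun i : 'I_k => (vert (G i) * vert (G i))%type) xpredT
     (fun i (q : vert (G i) * vert (G i)) => adj q.1 q.2)
     (fun i (q : vert (G i) * vert (G i)) =>
        Num.sqrt ((deg (@adj (G i)) q.1)%:R ^+ 2 + (deg (@adj (G i)) q.2)%:R ^+ 2) : R)) /=.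
  pose M1 (s : {i : 'I_k & (vert (G i) * vert (G i))%type}) : circ_vert G * circ_vert G :=
    (Tagged (fun j => vert (G j)) (tagged s).1, Tagged (fun j => vert (G j)) (tagged s).2).
  pose h' (p : circ_vert G * circ_vert G) : {i : 'I_k & (vert (G i) * vert (G i))%type} :=
    Tagged (fun i => (vert (G i) * vert (G i))%type) (tagged p.1, tagged_as p.1 p.2).
  have M1K : cancel M1 h' by case=> i [a b]; rewrite /M1 /h' /= tagged_asE.

  have HH := @sum_inj_le R _ _ M1 (fun s => adj (tagged s).1 (tagged s).2)
     (fun p => e p.1 p.2 && (tag p.1 == tag p.2)) fC (can_inj M1K).
  apply: le_trans (HH _ _); last by move=> j _.
    apply: ler_sum => -[i [a b]] /= ab.
    rewrite /fC /M1 /= ler_sqrt ?addr_ge0 ?exprn_ge0 ?ler0n //.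
    by apply: lerD; rewrite -!natrX ler_nat leq_exp2r // (deg_le x).
  by case=> i [a b] /= ab; rewrite /M1 /= eqxx andbT; exact: adj_in.
have H2 : 2 * \sum_(i < k) c i <= S2.
  pose M2 (j : 'I_k + 'I_k) : circ_vert G * circ_vert G :=
    match j with inl i => (X i, X (ordS i)) | inr i => (X (ordS i), X i) end.
  have injM2 : injective M2.
    case=> [i|i] [j|j] E; move: (congr1 (fun p => tag p.1) E) (congr1 (fun p => tag p.2) E) => /= h1 h2.
    - by rewrite h1.
    - by subst j; move: (ordSS_neq hk i); rewrite -h1 eqxx.
    - by subst j; move: (ordSS_neq hk i); rewrite -h2 eqxx.
    - by rewrite h2.
  have HH := @sum_inj_le R _ _ M2 xpredT
     (fun p => e p.1 p.2 && (tag p.1 != tag p.2)) fC injM2.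
  apply: le_trans (HH _ _); last by move=> j _.
    rewrite big_sumType /= mulr_natl mulr2n; apply: lerD; apply: ler_sum => i _ //.
    by rewrite /c /fC /= addrC.
  case=> i _ /=; apply/andP; split.
  - exact: adj_cyc1.
  - by rewrite eq_sym ordS_neq.
  - exact: adj_cyc2.
  - by rewrite ordS_neq.
have H3 : `|(dx G x 0)%:R - (dx G x k.-1)%:R| / Num.sqrt 2
    + \sum_(0 <= i < k.-1) `|(dx G x i)%:R - (dx G x i.+1)%:R| / Num.sqrt 2
    < \sum_(i < k) c i.
  have k0 : (0 < k)%N by lia.
  have -> : `|(dx G x 0)%:R - (dx G x k.-1)%:R| / Num.sqrt 2
    + \sum_(0 <= i < k.-1) `|(dx G x i)%:R - (dx G x i.+1)%:R| / Num.sqrt 2 =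
    \sum_(i < k) `|(dx G x i)%:R - (dx G x ((i.+1) %% k)%N)%:R| / Num.sqrt 2 :> R.
    by rewrite (cyc_sum (fun a b => `|(dx G x a)%:R - (dx G x b)%:R| / Num.sqrt 2 : R) k0) distrC.
  apply: ltr_sum.
    by apply/hasP; exists (Ordinal k0); rewrite ?mem_index_enum.
  move=> i _; rewrite -[((i.+1) %% k)%N]/(nat_of_ord (ordS i)) !dxE.
  apply: term_lt; exact: deg_pos.
lra.
Qed.
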